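(* Let $G$ be a simple cubic graph, and let $(G',r)$ be constructed from $G$ as described in the context. Then $\kappa(G',r)=\tau(G)+|E(G)|$, where $\tau(G)$ is the minimum size of a vertex cover of $G$.
   Context: Construction of $G'$ from a cubic graph $G$: start with $G$. (1) For each edge $e=xy$ of $G$, delete $xy$, add three new vertices $w_{x,e},w_e,w_{y,e}$ and the edges $xw_{x,e}, w_{x,e}w_e, w_ew_{y,e}, w_{y,e}y$. (2) For each edge $e=xy$ of $G$, add two new vertices $z_{x,e},z_{y,e}$ and the edges $w_{x,e}z_{x,e}, z_{x,e}w_e, w_ez_{y,e}, z_{y,e}w_{y,e}$ (so $\{w_{x,e},w_e,z_{x,e}\}$ and $\{w_{y,e},w_e,z_{y,e}\}$ induce triangles). (3) For every vertex $x$ of $G$ with incident edges $e,f,g$, add the edges $w_{x,e}w_{x,f}, w_{x,e}w_{x,g}, w_{x,f}w_{x,g}$. Requirements: for every edge $e=xy$ of $G$, $r(w_{x,e})=r(w_{y,e})=4$ and $r(w_e)=3$; $r(v')=0$ for all other vertices $v'$ of $G'$. For a graph $H$, a set $S\subseteq V(H)$ and $v\in V(H)\setminus S$, a $v$--$S$ fan of order $k$ is a collection of $k$ paths, each connecting $v$ to a vertex of $S$, pairwise vertex-disjoint except at $v$; $v$ is $k$-linked to $S$ if such a fan exists. A vector connectivity set for $(H,r)$ is a set $S$ such that every $v\in V(H)\setminus S$ is $r(v)$-linked to $S$; $\kappa(H,r)$ is the minimum size of such a set. A vertex cover of $G$ is a set of vertices containing an endpoint of every edge. *)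

(* Defs.v *)
From mathcomp Require Import all_boot.
Set Implicit Arguments. Unset Strict Implicit. Unset Printing Implicit Defensive.

Section General.
Variable H : finType.
Variable adj : rel H.

(* a v--S fan of order k: k paths v = v0, v1, ..., vm (stored as the list
   [v1;...;vm]) each ending in S, internally simple, pairwise vertex-disjoint
   except at v *)
Definition fan (v : H) (S : {set H}) (k : nat) : Prop :=
  exists ps : 'I_k -> seq H,
    (forall i, [/\ path adj v (ps i), uniq (v :: ps i) & last v (ps i) \in S]) /\
    (forall i j, i != j -> [disjoint ps i & ps j]).

Definition linked (v : H) (S : {set H}) (k : nat) : Prop := fan v S k.

Definition vc_set (r : H -> nat) (S : {set H}) : Prop :=
  forall v, v \notin S -> linked v S (r v).

Definition is_kappa (r : H -> nat) (n : nat) : Prop :=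
  (exists S, vc_set r S /\ #|S| = n) /\ (forall S, vc_set r S -> n <= #|S|).
End General.

Section Cubic.
Variable T : finType.
Variable e : rel T.

Definition vertex_cover (C : {set T}) : bool :=
  [forall x, forall y, e x y ==> (x \in C) || (y \in C)].

Definition tau : nat :=
  #|[arg min_(C < [set: T] | vertex_cover C) #|C| ]|.

Definition is_edge (s : {set T}) : bool :=
  [exists x, exists y, e x y && (s == [set x; y])].

Definition nedges : nat := #|[set s : {set T} | is_edge s]|.

(* raw vertices:  inl (inl x)      = original vertex x
                  inl (inr (x,y))  = w_{x,xy}
                  inr (inl s)      = w_e  for the edge e = s = {x,y}
                  inr (inr (x,y))  = z_{x,xy}                              *)
Definition Vraw : finType := ((T + (T * T)) + ({set T} + (T * T)))%type.

Definition validv (v : Vraw) : bool :=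
  match v with
  | inl (inl _) => true
  | inl (inr (x, y)) => e x y
  | inr (inl s) => is_edge s
  | inr (inr (x, y)) => e x y
  end.

Definition VG' : finType := {v : Vraw | validv v}.

Definition adj0 (u v : Vraw) : bool :=
  match u, v with
  | inl (inl x), inl (inr (x', _)) => x == x'
  | inl (inr (x, y)), inr (inl s) => s == [set x; y]
  | inl (inr (x, y)), inr (inr (x', y')) => (x == x') && (y == y')
  | inr (inr (x, y)), inr (inl s) => s == [set x; y]
  | inl (inr (x, y)), inl (inr (x', y')) => (x == x') && (y != y')  (* triangle at x *)
  | _, _ => false
  end.

Definition adjG' : rel VG' := fun u v => adj0 (val u) (val v) || adj0 (val v) (val u).

Definition rG' (v : VG') : nat :=
  match val v with
  | inl (inr _) => 4
  | inr (inl _) => 3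
  | _ => 0
  end.
End Cubic.

(* Main.v *)
Require Import Defs.
From mathcomp Require Import all_boot.
Set Implicit Arguments. Unset Strict Implicit. Unset Printing Implicit Defensive.


Section Gen.
Variable H : finType.
Variable adj : rel H.

Lemma mem_nth_flatten (L : seq (seq H)) i x :
  x \in nth [::] L i -> x \in flatten L.
Proof.
elim: L i => [|p L IH] [|i] //=.
  by rewrite mem_cat => ->.
by rewrite mem_cat => /IH ->; rewrite orbT.
Qed.

Lemma uniq_nth_flatten (L : seq (seq H)) i :
  uniq (flatten L) -> uniq (nth [::] L i).
Proof.
elim: L i => [|p L IH] [|i] //=; rewrite cat_uniq => /and3P[h1 h2 h3] //.
exact: IH.
Qed.

Lemma flatten_disj (L : seq (seq H)) i j :
  uniq (flatten L) -> i != j -> [disjoint nth [::] L i & nth [::] L j].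
Proof.
elim: L i j => [|p L IH] i j.
  by move=> _ _; rewrite !nth_nil disjoint_has.
rewrite /= cat_uniq => /and3P[h1 h2 h3].
case: i => [|i]; case: j => [|j] //= hij.
- rewrite disjoint_has; apply/hasPn => x hxp; apply/negP => hx.
  have hx' := mem_nth_flatten hx.
  by move/negP: h2; apply; apply/hasP; exists x.
- rewrite disjoint_sym disjoint_has; apply/hasPn => x hxp; apply/negP => hx.
  have hx' := mem_nth_flatten hx.
  by move/negP: h2; apply; apply/hasP; exists x.
- exact: IH.
Qed.

Lemma mkfan v (S : {set H}) (L : seq (seq H)) :
  all (fun p => path adj v p && (last v p \in S)) L -> uniq (v :: flatten L) ->
  fan adj v S (size L).
Proof.
move=> hall /= /andP[hv hu].
exists (fun i => nth [::] L i); split.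
- move=> i; have hi := ltn_ord i.
  move/allP: hall => /(_ _ (mem_nth [::] hi)) /andP[hp hl]; split=> //=.
  rewrite uniq_nth_flatten // andbT; apply: contra hv; exact: mem_nth_flatten.
- by move=> i j hij; apply: flatten_disj.
Qed.

Lemma fan_bound (K : finType) (h : H -> K) v (S : {set H}) k (Y : {set K}) :
  injective h -> fan adj v S k ->
  (forall p, path adj v p -> uniq (v :: p) -> last v p \in S ->
     exists2 u, u \in p & h u \in Y) -> k <= #|Y|.
Proof.
move=> hinj [ps [hp hd]] hY.
pose g (i : 'I_k) := if [pick u | (u \in ps i) && (h u \in Y)] is Some u then h u else h v.
have gP i : exists2 u, (u \in ps i) & g i = h u /\ h u \in Y.
  rewrite /g; case: pickP => [u /andP[h1 h2]|h0]; first by exists u.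
  have [a b c] := hp i; have [u hu1 hu2] := hY _ a b c.
  by move: (h0 u); rewrite hu1 hu2.
have ginj : injective g.
  move=> i j hij; apply/eqP; apply/negPn/negP => hne.
  have [u hu [gu _]] := gP i; have [w hw [gw _]] := gP j.
  move: hij; rewrite gu gw => /hinj huw; subst w.
  by move: (hd i j hne); rewrite disjoint_has => /hasPn /(_ _ hu); rewrite hw.
have -> : k = #|[set g i | i in 'I_k]|.
  by rewrite card_imset // card_ord.
apply: subset_leq_card; apply/subsetP => _ /imsetP[i _ ->].
by have [u _ [-> ]] := gP i.
Qed.
End Gen.


Section Spec.
Variable T : finType.
Variable e : rel T.

Hypothesis e_cubic : forall x : T, #|[set y | e x y]| = 3.
Local Notation V := (VG' e).
Local Notation adj := (@adjG' T e).
Definition adjraw (r q : Vraw T) := adj0 r q || adj0 q r.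

Lemma set2_eq (a b x y : T) : [set a; b] = [set x; y] -> (a = x /\ b = y) \/ (a = y /\ b = x).
Proof.
move=> hs.
have ha : a \in [set x; y] by rewrite -hs !inE eqxx.
have hb : b \in [set x; y] by rewrite -hs !inE eqxx orbT.
have hx : x \in [set a; b] by rewrite hs !inE eqxx.
have hy : y \in [set a; b] by rewrite hs !inE eqxx orbT.
move: ha hb hx hy; rewrite !inE.
case/orP=> /eqP->; case/orP=> /eqP->; rewrite ?orbb.
- by move=> _ /eqP->; left.
- by left.
- by right.
- by move=> /eqP-> _; left.
Qed.

Lemma nbr_E s q : adjraw (inr (inl s)) q ->
  exists a b, s = [set a; b] /\ (q = inl (inr (a, b)) \/ q = inr (inr (a, b))).
Proof.
case: q => [[x|[a b]]|[s'|[a b]]] //=; rewrite /adjraw /= ?orbF => /eqP ->;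
 exists a, b; by [split; [|left] | split; [|right]].
Qed.

Lemma nbr_Z a b q : adjraw (inr (inr (a, b))) q ->
  q = inr (inl [set a; b]) \/ q = inl (inr (a, b)).
Proof.
case: q => [[x|[c d]]|[s'|[c d]]] //=; rewrite /adjraw /= ?orbF.
- by case/andP=> /eqP-> /eqP->; right.
- by move=> /eqP ->; left.
Qed.

Lemma nbr_X x q : adjraw (inl (inl x)) q -> exists t, q = inl (inr (x, t)).
Proof.
case: q => [[z|[c d]]|[s'|[c d]]] //=; rewrite /adjraw /= ?orbF.
by move=> /eqP ->; exists d.
Qed.

Lemma nbr_W x y q : adjraw (inl (inr (x, y))) q ->
  [\/ q = inr (inl [set x; y]), q = inr (inr (x, y)), q = inl (inl x) |
     exists2 t, t != y & q = inl (inr (x, t))].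
Proof.
case: q => [[z|[c d]]|[s'|[c d]]] //=; rewrite /adjraw /=.
- by move=> /eqP ->; constructor 3.
- case/orP=> /andP[/eqP <- hd]; constructor 4; exists d => //.
  by rewrite eq_sym.
- by rewrite orbF => /eqP ->; constructor 1.
- by rewrite orbF => /andP[/eqP <- /eqP <-]; constructor 2.
Qed.

Lemma adj_raw (u w : V) : adj u w -> adjraw (val u) (val w).
Proof. by []. Qed.

Lemma path_start (v : V) (S : {set V}) p : path adj v p -> last v p \in S -> v \notin S ->
  exists h p', [/\ p = h :: p', adj v h, path adj h p' & last h p' \in S].
Proof.
case: p => [|h p'] /=; first by move=> _ ->.
by move=> /andP[a b] c _; exists h, p'.
Qed.

Lemma vinj (u w : V) : val u = val w -> u = w.
Proof. exact: val_inj. Qed.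

Lemma L1 (v : V) (S : {set V}) s x y :
  val v = inr (inl s) -> s = [set x; y] -> v \notin S ->
  (forall (u : V) a b, val u = inr (inr (a, b)) -> s = [set a; b] -> u \notin S) ->
  ~ fan adj v S 3.
Proof.
move=> hv hs hvS hZ hf.
have := fan_bound (h := val) (Y := [set inl (inr (x, y)); inl (inr (y, x))]) val_inj hf.
have hc : #|[set (inl (inr (x, y)) : Vraw T); inl (inr (y, x))]| <= 2.
  by rewrite cards2; case: (_ != _).
move=> H; suff : 3 <= 2 by []; apply: leq_trans hc; apply: H.
move=> p hp hu hl.
have [h [p' [ep hvh hp' hl']]] := path_start hp hl hvS; subst p.
have hY : forall a b, s = [set a; b] ->
   (inl (inr (a, b)) : Vraw T) \in [set inl (inr (x, y)); inl (inr (y, x))].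
  move=> a b; rewrite hs => /esym /set2_eq [[-> ->]|[-> ->]];
  by rewrite !inE eqxx ?orbT.
have := adj_raw hvh; rewrite hv => /nbr_E [a [b [hab [hq|hq]]]].
  by exists h; [rewrite inE eqxx | rewrite hq hY].
have hhS : h \notin S by apply: (hZ h a b).
have [h2 [p'' [ep hh2 _ _]]] := path_start hp' hl' hhS; subst p'.
have := adj_raw hh2; rewrite hq => /nbr_Z [] hq2.
  move: hu; rewrite /= !inE; have -> : h2 = v by apply: vinj; rewrite hq2 hv hab.
  by rewrite eqxx orbT.
by exists h2; [rewrite !inE eqxx orbT | rewrite hq2 hY].
Qed.

Lemma L2 (v : V) (S : {set V}) x y :
  val v = inl (inr (x, y)) ->
  (forall u : V, u \in S -> val u <> inl (inl x)) ->
  (forall (u : V) t, u \in S -> val u <> inl (inr (x, t))) ->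
  (forall u : V, u \in S -> val u <> inr (inr (x, y))) ->
  ~ fan adj v S 4.
Proof.
move=> hv hX hW hZ hf.
pose Y := (inr (inl [set x; y]) : Vraw T) |: [set (inl (inr (x, t)) : Vraw T) | t in [set t | e x t] :\ y].
have := fan_bound (h := val) (Y := Y) val_inj hf.
have hc : #|Y| <= 3.
  have hxy : e x y by have := valP v; rewrite hv.
  rewrite /Y cardsU1; apply: leq_trans (leq_add (leq_b1 _) (leq_imset_card _ _)) _.
  have := cardsD1 y [set t | e x t]; rewrite e_cubic inE hxy => ->.
  by [].
move=> H; suff : 4 <= 3 by []; apply: leq_trans hc; apply: H.
move=> p hp hu hl.
have hvS : v \notin S by apply/negP => /hW; apply; exact: hv.
have hYw : forall t, t != y -> e x t -> (inl (inr (x, t)) : Vraw T) \in Y.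
  move=> t hty hxt; rewrite /Y !inE; apply/orP; right; apply/imsetP; exists t => //.
  by rewrite !inE hty hxt.
have [h [p' [ep hvh hp' hl']]] := path_start hp hl hvS; subst p.
have := adj_raw hvh; rewrite hv => /nbr_W [hq|hq|hq|[t ht hq]].
- by exists h; [rewrite inE eqxx | rewrite hq /Y !inE eqxx].
- have hhS : h \notin S by apply/negP => /hZ.
  have [h2 [p'' [ep hh2 _ _]]] := path_start hp' hl' hhS; subst p'.
  have := adj_raw hh2; rewrite hq => /nbr_Z [] hq2.
    by exists h2; [rewrite !inE eqxx orbT | rewrite hq2 /Y !inE eqxx].
  move: hu; rewrite /= !inE; have -> : h2 = v by apply: vinj; rewrite hq2 hv.
  by rewrite eqxx orbT.
- have hhS : h \notin S by apply/negP => /hX.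
  have [h2 [p'' [ep hh2 _ _]]] := path_start hp' hl' hhS; subst p'.
  have := adj_raw hh2; rewrite hq => /nbr_X [t hq2].
  have ht : e x t by have := valP h2; rewrite hq2.
  case: (eqVneq t y) => hty.
    move: hu; rewrite /= !inE; have -> : h2 = v by apply: vinj; rewrite hq2 hv hty.
    by rewrite eqxx orbT.
  by exists h2; [rewrite !inE eqxx orbT | rewrite hq2 hYw].
- have hxt : e x t by have := valP h; rewrite hq.
  by exists h; [rewrite inE eqxx | rewrite hq hYw].
Qed.

Hypothesis e_sym : symmetric e.
Hypothesis e_irr : irreflexive e.

Definition owner (q : Vraw T) : option T :=
  match q with inl (inl x) => Some x | inl (inr (x, _)) => Some x | _ => None end.
Definition ekey (q : Vraw T) : option {set T} :=
  match q with inr (inl s) => Some s | inr (inr (a, b)) => Some [set a; b] | _ => None end.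

Lemma card_sep (K : finType) (A : {set K}) (P : pred K) :
  #|[set q in A | P q]| = \sum_(q in A) (P q : nat).
Proof.
rewrite -sum1_card.
rewrite (eq_bigl (fun q => (q \in A) && P q)); last by move=> q; rewrite inE.
rewrite big_mkcondr /=; apply: eq_bigr => q _; by case: (P q).
Qed.

Lemma tau_min (C : {set T}) : vertex_cover e C -> tau e <= #|C|.
Proof.
rewrite /tau; case: arg_minnP => [|C0 _ hmin hC]; last exact: hmin.
by apply/forallP => x; apply/forallP => y; apply/implyP => _; rewrite !inE.
Qed.

Lemma tau_ex : exists2 C0, vertex_cover e C0 & #|C0| = tau e.
Proof.
rewrite /tau; case: arg_minnP => [|C0 hC0 _]; last by exists C0.
by apply/forallP => x; apply/forallP => y; apply/implyP => _; rewrite !inE.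
Qed.

Lemma lower (S : {set V}) : vc_set adj (@rG' T e) S -> tau e + nedges e <= #|S|.
Proof.
move=> hS.
pose rawS := [set val u | u in S].
have hcardS : #|S| = #|rawS| by rewrite card_imset //; exact: val_inj.
pose L0 := [set q : Vraw T | owner q != None].
have hsplit : #|rawS| = #|rawS :&: L0| + #|rawS :\: L0| by rewrite cardsID.
pose C := [set x | [exists q in rawS, owner q == Some x]].
have hCL : #|C| <= #|rawS :&: L0|.
  rewrite -(card_imset C (@Some_inj _)).

  apply: leq_trans (leq_imset_card owner _); apply: subset_leq_card.
  apply/subsetP => _ /imsetP[x hx ->]; move: hx; rewrite inE => /existsP[q /andP[hq /eqP hoq]].
  by apply/imsetP; exists q => //; rewrite !inE hq hoq.
pose E := [set s | is_edge e s].
pose R := rawS :\: L0.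
pose F s := [set q in R | ekey q == Some s].
have hsum : \sum_(s in E) #|F s| <= #|R|.
  rewrite (eq_bigr (fun s => \sum_(q in R) (ekey q == Some s : nat))); last by move=> s _; rewrite card_sep.
  rewrite exchange_big /= -[#|R|]sum1_card; apply: leq_sum => q _.
  case: (ekey q) => [s0|]; last by rewrite big1.
  apply: leq_trans (_ : \sum_i (i == s0 : nat) <= 1).
    rewrite [X in _ <= X](bigID (fun i => i \in E)) /= -[X in X <= _]addn0.
    apply: leq_add; last by [].
    by apply: leq_sum => i _; rewrite eq_sym.
  by rewrite (bigD1 s0) //= eqxx big1 // => i /negbTE ->.
have inR : forall u : V, u \in S -> (exists s, val u = inr (inl s)) \/ (exists a b, val u = inr (inr (a, b))) -> val u \in R.
  move=> u hu hk; rewrite !inE (imset_f _ hu) andbT.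
  by case: hk => [[s ->]|[a [b ->]]].
have hnotC : forall x (u : V), x \notin C -> u \in S -> owner (val u) <> Some x.
  move=> x u hx hu ho; move/negP: hx; apply; rewrite inE; apply/existsP; exists (val u).
  by rewrite (imset_f _ hu) ho eqxx.
have hzS : forall x y, e x y -> x \notin C -> (inr (inr (x, y)) : Vraw T) \in rawS.
  move=> x y hxy hx; apply/negPn/negP => hz.
  pose v : V := exist _ (inl (inr (x, y))) hxy.
  have hvS : v \notin S by apply/negP => /(hnotC _ _ hx).
  apply: (L2 (v := v) (S := S) (x := x) (y := y)) => //.
  - by move=> u hu hv; apply: (hnotC _ _ hx hu); rewrite hv.
  - by move=> u t hu hv; apply: (hnotC _ _ hx hu); rewrite hv.
  - by move=> u hu hv; move/negP: hz; apply; rewrite -hv imset_f.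
  - exact: (hS v hvS).
pose bad s := [exists x, exists y, [&& e x y, s == [set x; y], x \notin C & y \notin C]].
have hF2 : forall s, bad s -> 1 < #|F s|.
  move=> s /existsP[x /existsP[y /and4P[hxy /eqP hs hx hy]]].
  have hyx : e y x by rewrite e_sym.
  have hne : x != y by apply/negP => /eqP exy; move: hxy; rewrite exy e_irr.
  have hz1 := hzS _ _ hxy hx; have hz2 := hzS _ _ hyx hy.
  have <- : #|[set (inr (inr (x, y)) : Vraw T); inr (inr (y, x))]| = 2.
    rewrite cards2 (_ : _ != _ = true) //; apply/eqP => -[] exy _.
    by rewrite exy eqxx in hne.
  apply: subset_leq_card; apply/subsetP => q; rewrite !inE => /orP[] /eqP ->;
    rewrite /=; [rewrite hz1 hs eqxx | rewrite hz2 hs setUC eqxx] => //.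
have hF1 : forall s, s \in E -> 0 < #|F s|.
  move=> s hs; rewrite inE in hs.
  have /existsP[x /existsP[y /andP[hxy /eqP hsxy]]] := hs.
  rewrite card_gt0; apply/negP => /eqP h0.
  pose v : V := exist _ (inr (inl s)) hs.
  have hvS : v \notin S.
    apply/negP => hv; have : val v \in F s by rewrite /F /R !inE /= (imset_f _ hv) eqxx.
    by rewrite h0 inE.
  apply: (L1 (v := v) (S := S) (s := s) (x := x) (y := y)) => //.
  - move=> u a b hu hab; apply/negP => huS.
    have : val u \in F s by rewrite /F /R !inE hu /= -hu (imset_f _ huS) hab eqxx.
    by rewrite h0 inE.
  - exact: (hS v hvS).
pose Dbad := [set s in E | bad s].
have hER : #|E| + #|Dbad| <= #|R|.
  apply: leq_trans hsum.
  rewrite /Dbad card_sep -sum1_card -big_split /=; apply: leq_sum => s hs.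
  case hb: (bad s) => /=; first by rewrite addn1; apply: hF2.
  by rewrite addn0; apply: hF1.
pose Q x y := [&& e x y, x \notin C, y \notin C & enum_rank x < enum_rank y].
pose B := [set x | [exists y, Q x y]].
pose mk x := [set x; odflt x [pick y | Q x y]].
have hmk : forall x, x \in B -> exists2 y, Q x y & mk x = [set x; y].
  move=> x; rewrite inE => /existsP[y0 hy0]; rewrite /mk; case: pickP => [y hy|h0].
    by exists y.
  by move: (h0 y0); rewrite hy0.
have hBD : #|B| <= #|Dbad|.
  rewrite -(card_in_imset (f := mk)).
    apply: subset_leq_card; apply/subsetP => _ /imsetP[x hx ->].
    have [y /and4P[hxy hx' hy' hr] ->] := hmk x hx.
    rewrite !inE; apply/andP; split; apply/existsP; exists x; apply/existsP; exists y.
      by rewrite hxy eqxx.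
    by rewrite hxy eqxx hx' hy'.
  move=> x1 x2 h1 h2; have [y1 /and4P[_ _ _ r1] ->] := hmk x1 h1.
  have [y2 /and4P[_ _ _ r2] ->] := hmk x2 h2.
  move/set2_eq => [[-> _]|[e1 e2]] //.
  subst; have := ltn_trans r1 r2; by rewrite ltnn.
have hcov : vertex_cover e (C :|: B).
  apply/forallP => x; apply/forallP => y; apply/implyP => hxy.
  rewrite !in_setU; case hx: (x \in C) => //; case hy: (y \in C) => /=; first by rewrite orbT.
  have hne : enum_rank x != enum_rank y.
    apply/negP => /eqP /enum_rank_inj exy; move: hxy; by rewrite exy e_irr.
  case: (ltngtP (enum_rank x) (enum_rank y)) => hr.
  - by apply/orP; left; rewrite inE; apply/existsP; exists y; rewrite /Q hxy hx hy hr.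
  - by apply/orP; right; rewrite inE; apply/existsP; exists x; rewrite /Q e_sym hxy hx hy hr.
  - by move: hne; rewrite (val_inj hr) eqxx.
have ht := tau_min hcov.
rewrite hcardS hsplit /nedges -/E.
apply: leq_trans (_ : #|C| + #|B| + #|E| <= _).
  rewrite leq_add2r; apply: leq_trans ht _; rewrite cardsU; exact: leq_subr.
rewrite -addnA; apply: leq_add => //; rewrite addnC; apply: leq_trans hER.
by rewrite leq_add2l.
Qed.
End Spec.


Lemma eq_inl (A B : eqType) (a a' : A) : (@inl A B a == inl a') = (a == a').
Proof. by apply/eqP/eqP => [[]|->]. Qed.
Lemma eq_inr (A B : eqType) (b b' : B) : (@inr A B b == inr b') = (b == b').
Proof. by apply/eqP/eqP => [[]|->]. Qed.
Lemma eq_lr (A B : eqType) (a : A) (b : B) : (inl a == inr b) = false.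
Proof. by apply/eqP. Qed.
Lemma eq_rl (A B : eqType) (a : A) (b : B) : (inr b == inl a) = false.
Proof. by apply/eqP. Qed.

Section Up.
Variable T : finType.
Variable e : rel T.
Hypothesis e_cubic : forall x : T, #|[set y | e x y]| = 3.
Hypothesis e_sym : symmetric e.
Hypothesis e_irr : irreflexive e.
Variable C0 : {set T}.
Hypothesis hC0 : vertex_cover e C0.

Local Notation V := (VG' e).
Local Notation adj := (@adjG' T e).

Definition chosen x y := (x \notin C0) || ((y \in C0) && (enum_rank x < enum_rank y)).

Definition inSraw (q : Vraw T) : bool :=
  match q with inl (inl x) => x \in C0 | inr (inr (x, y)) => chosen x y | _ => false end.

Definition S0 : {set V} := [set v | inSraw (val v)].

Lemma cov x y : e x y -> (x \in C0) || (y \in C0).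
Proof. move=> hxy; move/forallP: hC0 => /(_ x) /forallP /(_ y) /implyP; exact. Qed.

Lemma chosen_or x y : e x y -> chosen x y || chosen y x.
Proof.
move=> hxy; rewrite /chosen.
case hx: (x \in C0) => //=; case hy: (y \in C0) => //=.
have hne : enum_rank x != enum_rank y.
  apply/negP => /eqP /enum_rank_inj exy; move: hxy; by rewrite exy e_irr.
by case: (ltngtP (enum_rank x) (enum_rank y)) => // hr; move: hne; rewrite (val_inj hr) eqxx.
Qed.

Lemma chosen_excl x y : e x y -> chosen x y -> chosen y x -> False.
Proof.
move=> hxy; have := cov hxy; rewrite /chosen.
case hx: (x \in C0); case hy: (y \in C0) => //= _ h1 h2.
by have := ltn_trans h1 h2; rewrite ltnn.
Qed.

Lemma chosen_C0 x y : e x y -> chosen x y -> y \in C0.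
Proof.
move=> hxy; have := cov hxy; rewrite /chosen.
by case hx: (x \in C0); case hy: (y \in C0).
Qed.

Lemma other_nb x y : e x y -> exists a b, [/\ e x a, e x b, a != y, b != y & a != b].
Proof.
move=> hxy.
have : #|[set t | e x t] :\ y| == 2.
  by have := cardsD1 y [set t | e x t]; rewrite e_cubic inE hxy => -[] ->.
case/cards2P => a [b [hab hs]].
have ha : a \in [set t | e x t] :\ y by rewrite hs !inE eqxx.
have hb : b \in [set t | e x t] :\ y by rewrite hs !inE eqxx orbT.
move: ha hb; rewrite !inE => /andP[hay hxa] /andP[hby hxb].
by exists a, b.
Qed.


Lemma edgeP x y : e x y -> is_edge e [set x; y].
Proof. by move=> h; apply/existsP; exists x; apply/existsP; exists y; rewrite h eqxx. Qed.
Lemma esym x y : e x y -> e y x.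
Proof. by rewrite e_sym. Qed.

Definition vX (x : T) : V := exist _ (inl (inl x)) isT.
Definition vW x y (h : e x y) : V := exist _ (inl (inr (x, y))) h.
Definition vZ x y (h : e x y) : V := exist _ (inr (inr (x, y))) h.
Definition vE x y (h : e x y) : V := exist _ (inr (inl [set x; y])) (edgeP h).

Definition route x t (h : e x t) : seq V :=
  if chosen x t then [:: vZ h] else [:: vE h; vZ (esym h)].

Lemma route_ok x t (h : e x t) :
  path adj (vW h) (route h) && (last (vW h) (route h) \in S0).
Proof.
rewrite /route; case hc: (chosen x t) => /=; rewrite /adjG' /= !inE /= ?eqxx ?hc //=.
have := chosen_or h; rewrite hc /= => ->; by rewrite setUC eqxx.
Qed.

Lemma set2_neq (x t t' : T) : t != x -> t != t' -> ([set x; t] == [set x; t']) = false.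
Proof.
move=> h1 h2; apply/negP => /eqP /set2_eq [[_ ht]|[_ ht]].
  by rewrite ht eqxx in h2.
by rewrite ht eqxx in h1.
Qed.

Lemma neqF (A : eqType) (u w : A) : u != w -> (u == w) = false.
Proof. exact: negbTE. Qed.

Definition rawroute x t (c : bool) : seq (Vraw T) :=
  if c then [:: inr (inr (x, t))] else [:: inr (inl [set x; t]); inr (inr (t, x))].

Lemma map_route x t (h : e x t) : map val (route h) = rawroute x t (chosen x t).
Proof. by rewrite /route /rawroute; case: (chosen x t). Qed.

Lemma raw_uniqW x y a b (c0 cy ca cb : bool) :
  x != y -> x != a -> x != b -> a != y -> b != y -> a != b -> (~~ c0 -> cy) ->
  uniq (inl (inr (x, y)) :: (if c0 then [:: inl (inl x)] else [:: inr (inl [set x; y]); inl (inr (y, x)); inl (inl y)])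
     ++ rawroute x y cy ++ (inl (inr (x, a)) :: rawroute x a ca) ++ (inl (inr (x, b)) :: rawroute x b cb)).
Proof.
move=> nxy nxa nxb hay hby hab hc.
have nyx : y != x by rewrite eq_sym.
have nax : a != x by rewrite eq_sym.
have nbx : b != x by rewrite eq_sym.
have nya : y != a by rewrite eq_sym.
have nyb : y != b by rewrite eq_sym.
have nba : b != a by rewrite eq_sym.
rewrite /rawroute; case: c0 hc => hc; [|rewrite hc //]; case: cy hc => hc; case: ca; case: cb;
  rewrite /= !inE ?(eq_inl, eq_inr, eq_lr, eq_rl, xpair_eqE) ?eqxx /=.
all: rewrite ?(set2_neq nyx nya) ?(set2_neq nyx nyb) ?(set2_neq nax hab).
all: rewrite ?(negbTE nxy) ?(negbTE nyx) ?(negbTE nxa) ?(negbTE nax) ?(negbTE nxb) ?(negbTE nbx)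
  ?(negbTE nya) ?(negbTE nyb) ?(negbTE hab) //.
Qed.

Lemma fanW x y (h : e x y) : fan adj (vW h) S0 4.
Proof.
have [a [b [hxa hxb hay hby hab]]] := other_nb h.
have nxy : x != y by apply/negP => /eqP exy; move: h; rewrite exy e_irr.
have nxa : x != a by apply/negP => /eqP exy; move: hxa; rewrite exy e_irr.
have nxb : x != b by apply/negP => /eqP exy; move: hxb; rewrite exy e_irr.
pose P0 := if x \in C0 then [:: vX x] else [:: vE h; vW (esym h); vX y].
have -> : 4 = size [:: P0; route h; vW hxa :: route hxa; vW hxb :: route hxb] by [].
apply: mkfan.
  rewrite /=; apply/and5P; split => //; first last.
  - by rewrite -andbA route_ok andbT /adjG' /= eqxx /= eq_sym hby.
  - by rewrite -andbA route_ok andbT /adjG' /= eqxx /= eq_sym hay.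
  - exact: route_ok.
  rewrite /P0; case hx: (x \in C0); rewrite /= /adjG' /= ?eqxx ?inE /= ?hx //=.
  have := cov h; rewrite hx /= => ->; by rewrite setUC eqxx.
rewrite -(map_inj_uniq val_inj).
rewrite (_ : map val _ = inl (inr (x, y)) :: (if x \in C0 then [:: inl (inl x)] else [:: inr (inl [set x; y]); inl (inr (y, x)); inl (inl y)])
     ++ rawroute x y (chosen x y) ++ (inl (inr (x, a)) :: rawroute x a (chosen x a)) ++ (inl (inr (x, b)) :: rawroute x b (chosen x b))).
  apply: raw_uniqW => //; by rewrite /chosen => ->.
rewrite /= !map_cat /= !map_route /P0 cats0 !map_cat /= !map_route.
case: (x \in C0) => //.
Qed.

Lemma raw_uniqE x y a (c0 : bool) :
  x != y -> a != y ->
  uniq (inr (inl [set x; y]) :: [:: inr (inr (x, y)); inl (inr (y, x)); inl (inl y)] ++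
     (if c0 then [:: inl (inr (x, y)); inl (inl x)] else [:: inl (inr (x, y)); inl (inr (x, a)); inr (inr (x, a))]) : seq (Vraw T)).
Proof.
move=> nxy hay.
have nyx : y != x by rewrite eq_sym.
have nya : y != a by rewrite eq_sym.
case: c0; rewrite /= !inE ?(eq_inl, eq_inr, eq_lr, eq_rl, xpair_eqE) ?eqxx /=;
rewrite ?(negbTE nxy) ?(negbTE nyx) ?(negbTE hay) ?(negbTE nya) /= ?andbF //.
Qed.

Lemma fanE_or x y (h : e x y) (hc : chosen x y) (hs : is_edge e [set x; y]) :
  fan adj (exist _ (inr (inl [set x; y])) hs : V) S0 3.
Proof.
have [a [b [hxa _ hay _ _]]] := other_nb h.
have nxy : x != y by apply/negP => /eqP exy; move: h; rewrite exy e_irr.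
pose P3 := if x \in C0 then [:: vW h; vX x] else [:: vW h; vW hxa; vZ hxa].
have -> : 3 = size [:: [:: vZ h]; [:: vW (esym h); vX y]; P3] by [].
apply: mkfan.
  rewrite /=; apply/and4P; split => //.
  - by rewrite /adjG' /= eqxx /= /S0 inE /=.
  - by rewrite /adjG' /= setUC !eqxx /= /S0 inE /= (chosen_C0 h hc).
  rewrite /P3; case hx: (x \in C0); rewrite /= /adjG' /= ?eqxx /S0 ?inE /= ?hx //=.
  by rewrite eq_sym hay /chosen hx.
rewrite -(map_inj_uniq val_inj).
rewrite (_ : map val _ = inr (inl [set x; y]) :: [:: inr (inr (x, y)); inl (inr (y, x)); inl (inl y)] ++
     (if x \in C0 then [:: inl (inr (x, y)); inl (inl x)] else [:: inl (inr (x, y)); inl (inr (x, a)); inr (inr (x, a))])).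
  exact: raw_uniqE.
by rewrite /P3; case: (x \in C0).
Qed.

Lemma fanE (v : V) s : val v = inr (inl s) -> fan adj v S0 3.
Proof.
case: v => q hq /= eq; subst q.
have /existsP[x /existsP[y /andP[h /eqP es]]] := hq.
subst s.
case/orP: (chosen_or h) => hc.
  exact: fanE_or.
have hs' : is_edge e [set y; x] by rewrite setUC.
have -> : (exist _ (inr (inl [set x; y])) hq : V) = exist _ (inr (inl [set y; x])) hs'.
  by apply: val_inj; rewrite /= setUC.
exact: (fanE_or (esym h) hc).
Qed.

End Up.

Section Up2.
Variable T : finType.
Variable e : rel T.
Hypothesis e_cubic : forall x : T, #|[set y | e x y]| = 3.
Hypothesis e_sym : symmetric e.
Hypothesis e_irr : irreflexive e.
Variable C0 : {set T}.
Hypothesis hC0 : vertex_cover e C0.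
Local Notation V := (VG' e).
Local Notation adj := (@adjG' T e).
Local Notation S0 := (S0 e C0).
Local Notation chosen := (chosen C0).
Lemma vcS0 : vc_set adj (@rG' T e) S0.
Proof.
move=> [q hq] hv; case: q hq hv => [[x|[x y]]|[s|[x y]]] hq hv.
- by change (fan adj (exist _ (inl (inl x)) hq : V) S0 (size ([::] : seq (seq V)))); apply: mkfan.
- exact: fanW.
- by apply: (@fanE _ _ e_cubic _ e_irr C0 hC0 (exist _ (inr (inl s)) hq) s).
- by change (fan adj (exist _ (inr (inr (x, y))) hq : V) S0 (size ([::] : seq (seq V)))); apply: mkfan.
Qed.

Lemma cardS0 : #|S0| = #|C0| + nedges e.
Proof.
pose P := [set p : T * T | e p.1 p.2 && chosen p.1 p.2].
pose A := [set (inl (inl x) : Vraw T) | x in C0].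
pose Bz := [set (inr (inr p) : Vraw T) | p in P].
have memA : forall q, (q \in A) = (if q is inl (inl x) then x \in C0 else false).
  move=> q; apply/imsetP/idP.
    by move=> [x hx ->].
  by case: q => [[x|//]|//] hx; exists x.
have memB : forall q, (q \in Bz) = (if q is inr (inr p) then p \in P else false).
  move=> q; apply/imsetP/idP.
    by move=> [x hx ->].
  by case: q => [//|[//|p]] hx; exists p.
have hraw : [set val v | v in S0] = A :|: Bz.
  apply/setP => q; rewrite in_setU memA memB.
  apply/imsetP/idP.
    move=> [v]; rewrite inE; case: v => q' hq' /= hin ->.
    case: q' hq' hin => [[x|[x y]]|[s|[x y]]] //= hq' hin; first by rewrite hin.
    by rewrite inE /= hq' hin.
  case: q => [[x|//]|[//|[x y]]] /= hin.
    by rewrite orbF in hin; exists (exist _ (inl (inl x)) isT : V) => //; rewrite inE /=.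
  move: hin; rewrite /= inE /= => /andP[hxy hc].
  exists (exist _ (inr (inr (x, y))) hxy : V); last by [].
  rewrite inE /=.
  exact hc.
have -> : #|S0| = #|[set val v | v in S0]| by rewrite card_imset //; exact: val_inj.
rewrite hraw cardsU.
have -> : A :&: Bz = set0.
  apply/setP => q; rewrite in_setI memA memB in_set0.
  by case: q => [[x|p]|[s|p]] //=; rewrite andbF.
rewrite cards0 subn0 card_imset; last by move=> ? ? [].
rewrite card_imset; last by move=> ? ? [].
congr (_ + _).
rewrite /nedges -(card_in_imset (f := fun p : T * T => [set p.1; p.2])).
  suff -> : [set [set p.1; p.2] | p in P] = [set s | is_edge e s] by [].
  apply/setP => s; rewrite [in RHS]inE; apply/imsetP/idP.
    move=> [[x y]]; rewrite inE /= => /andP[hxy _] ->.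
    by apply/existsP; exists x; apply/existsP; exists y; rewrite hxy eqxx.
  move=> /existsP[x /existsP[y /andP[hxy /eqP ->]]].
  case/orP: (chosen_or e_irr C0 hxy) => hc.
    by exists (x, y); rewrite // inE /= hxy hc.
  exists (y, x); last by rewrite /= setUC.
  by rewrite inE /= hc e_sym hxy.
move=> [x1 y1] [x2 y2]; rewrite !inE /= => /andP[h1 c1] /andP[h2 c2] /set2_eq [[-> ->]|[ex ey]] //.
subst; exfalso; exact: (chosen_excl hC0 h1 c1 c2).
Qed.
End Up2.


Theorem lemma3 (T : finType) (e : rel T)
  (e_sym : symmetric e) (e_irr : irreflexive e)
  (e_cubic : forall x : T, #|[set y | e x y]| = 3) :
  is_kappa (@adjG' T e) (@rG' T e) (tau e + nedges e).
Proof.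
split.
- have [C0 hC0 hcard] := tau_ex e.
  exists (S0 e C0); split; first by apply: vcS0.
  by rewrite (cardS0 e_sym e_irr hC0) hcard.
- by move=> S hS; apply: lower.
Qed.
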